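(* Let $k\in\mathbb{N}_0$, $n=2k+1$, and let $\Omega\subset\mathbb{R}^p$ be a rectangular domain equipped with a regular rectangular grid. For a sufficiently smooth function $\phi:\Omega\to\mathbb{R}$ let $\mathcal{H}_\phi$ be its global interpolant. Then $\mathcal{F}[\mathcal{H}_\phi]\le\mathcal{F}[\phi]$. Moreover, $\mathcal{H}_\phi$ minimizes $\mathcal{F}$ in the following class: if $\psi:\Omega\to\mathbb{R}$ is such that its restriction to each closed grid cell $Q$ is smooth up to the boundary of $Q$, and for each cell $Q$, each vertex $\vec x_{\vec m}$ of $Q$ and each $\vec\alpha\in\{0,\dots,k\}^p$ one has $\partial^{\vec\alpha}(\psi|_Q)(\vec x_{\vec m})=\partial^{\vec\alpha}\phi(\vec x_{\vec m})$, then $\mathcal{F}[\mathcal{H}_\phi]\le\mathcal{F}[\psi]$.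
   Context: Multi-index notation: $\partial^{\vec\alpha}=\partial_1^{\alpha_1}\cdots\partial_p^{\alpha_p}$. A $p$-$n$ polynomial is a polynomial in $p$ variables of degree at most $n$ in each variable separately. Global interpolant: given grid data $\phi^{\vec m}_{\vec\alpha}$ at each grid point $\vec x_{\vec m}$, $\vec\alpha\in\{0,\dots,k\}^p$, the global interpolant is the function which on each grid cell $Q$ equals the unique $p$-$n$ polynomial $P_Q$ with $\partial^{\vec\alpha}P_Q(\vec x_{\vec m})=\phi^{\vec m}_{\vec\alpha}$ at all vertices $\vec x_{\vec m}$ of $Q$ and all $\vec\alpha\in\{0,\dots,k\}^p$ (it is $C^k$ across cell boundaries). $\mathcal{H}_\phi$ is the global interpolant with data $\phi^{\vec m}_{\vec\alpha}=\partial^{\vec\alpha}\phi(\vec x_{\vec m})$. Stability functional: with $\vec\beta=(k+1,\dots,k+1)\in\mathbb{N}_0^p$, $\mathcal{F}[\phi]=\int_\Omega(\partial^{\vec\beta}\phi(\vec x))^2\,d\vec x$, where for functions smooth on each cell (such as $\mathcal{H}_\phi$ and $\psi$) this is interpreted as the sum over cells $Q$ of $\int_Q(\partial^{\vec\beta}(\cdot|_Q))^2\,d\vec x$. *)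

(* Defs.v *)
From Stdlib Require Import Reals Lra List Arith ClassicalEpsilon.
Open Scope R_scope.

(* Points of R^p are represented as  x : nat -> R  with x i = 0 for i >= p
   (enforced by the membership predicates below).  Multi-indices are
   nat -> nat, with entries beyond p equal to 0. *)
Definition pt := nat -> R.
Definition mi := nat -> nat.

Definition upd (x : pt) (i : nat) (t : R) : pt :=
  fun j => if Nat.eqb j i then t else x j.

Definition incr (al : mi) (i : nat) : mi :=
  fun j => if Nat.eqb j i then S (al j) else al j.

Definition mi0 : mi := fun _ => O.

Definition box (p : nat) (l u : pt) (x : pt) : Prop :=
  forall i, ((i < p)%nat -> l i <= x i <= u i) /\ ((p <= i)%nat -> x i = 0).

Definition partial_within (S : pt -> Prop) (i : nat) (g g' : pt -> R) : Prop :=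
  forall x, S x -> forall eps, 0 < eps -> exists delta, 0 < delta /\
    forall t, t <> 0 -> Rabs t < delta -> S (upd x i (x i + t)) ->
      Rabs ((g (upd x i (x i + t)) - g x) / t - g' x) < eps.

Definition cont_within (p : nat) (S : pt -> Prop) (g : pt -> R) : Prop :=
  forall x, S x -> forall eps, 0 < eps -> exists delta, 0 < delta /\
    forall y, S y -> (forall i, (i < p)%nat -> Rabs (y i - x i) < delta) ->
      Rabs (g y - g x) < eps.

(* f is C^infinity on S (up to the boundary), D al being its partial
   derivative  d^al f  on S. *)
Definition smooth_on (p : nat) (S : pt -> Prop) (f : pt -> R) (D : mi -> pt -> R)
  : Prop :=
  (forall x, S x -> D mi0 x = f x) /\
  (forall al i, (i < p)%nat -> partial_within S i (D al) (D (incr al i))) /\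
  (forall al, cont_within p S (D al)).

(* Riemann integral (0 if not Riemann integrable; proof-irrelevant) *)
Definition RInt (f : R -> R) (a b : R) : R :=
  match excluded_middle_informative (inhabited (Riemann_integrable f a b)) with
  | left H => RiemannInt (epsilon H (fun _ => True))
  | right _ => 0
  end.

Fixpoint box_int (d : nat) (l u : pt) (g : pt -> R) (x : pt) : R :=
  match d with
  | O => g x
  | S d' => RInt (fun t => box_int d' l u g (upd x d' t)) (l d') (u d')
  end.

Definition integral (p : nat) (l u : pt) (g : pt -> R) : R :=
  box_int p l u g (fun _ => 0).

Fixpoint msum (d : nat) (N : nat -> nat) (F : mi -> R) : R :=
  match d with
  | O => F mi0
  | S d' => fold_right Rplus 0
              (map (fun j => msum d' N (fun c => F (fun i => if Nat.eqb i d' then j else c i)))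
                   (seq 0 (N d')))
  end.

Definition mprod (p : nat) (F : nat -> R) : R :=
  fold_right Rmult 1 (map F (seq 0 p)).

Definition is_pn_poly (p n : nat) (P : pt -> R) : Prop :=
  exists coef : mi -> R, forall x,
    P x = msum p (fun _ => S n) (fun g => coef g * mprod p (fun i => x i ^ g i)).

Definition mi_le (p k : nat) (al : mi) : Prop :=
  forall i, ((i < p)%nat -> (al i <= k)%nat) /\ ((p <= i)%nat -> al i = O).

Definition beta (p k : nat) : mi := fun i => if Nat.ltb i p then S k else O.

(* Regular grid on  Omega = prod_{i<p} [a i, b i]  with N i cells along axis i *)
Definition is_cell (p : nat) (N : nat -> nat) (c : mi) : Prop :=
  forall i, ((i < p)%nat -> (c i < N i)%nat) /\ ((p <= i)%nat -> c i = O).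

Definition cell_lo (a b : pt) (N : nat -> nat) (c : mi) : pt :=
  fun i => a i + INR (c i) * ((b i - a i) / INR (N i)).
Definition cell_hi (a b : pt) (N : nat -> nat) (c : mi) : pt :=
  fun i => a i + INR (S (c i)) * ((b i - a i) / INR (N i)).

Definition cell_box p a b N c : pt -> Prop := box p (cell_lo a b N c) (cell_hi a b N c).

Definition is_vertex (p : nat) (a b : pt) (N : nat -> nat) (c : mi) (v : pt) : Prop :=
  forall i, ((i < p)%nat -> v i = cell_lo a b N c i \/ v i = cell_hi a b N c i) /\
            ((p <= i)%nat -> v i = 0).

Definition F_global (p k : nat) (a b : pt) (D : mi -> pt -> R) : R :=
  integral p a b (fun x => (D (beta p k) x) ^ 2).

(* F on a cellwise-smooth function: DC c is the derivative family of the
   restriction to cell c *)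
Definition F_cells (p k : nat) (a b : pt) (N : nat -> nat) (DC : mi -> mi -> pt -> R) : R :=
  msum p N (fun c => integral p (cell_lo a b N c) (cell_hi a b N c)
                        (fun x => (DC c (beta p k) x) ^ 2)).

(* Main.v *)
Require Import Defs.
From Stdlib Require Import Reals Lra Lia List Arith ClassicalEpsilon FunctionalExtensionality.
Open Scope R_scope.

Definition ctw1 (a b : R) (f : R -> R) : Prop :=
  forall x, a <= x <= b -> forall eps, 0 < eps -> exists delta, 0 < delta /\
    forall y, a <= y <= b -> Rabs (y - x) < delta -> Rabs (f y - f x) < eps.

Definition dvw1 (a b : R) (f f' : R -> R) : Prop :=
  forall x, a < x < b -> derivable_pt_lim f x (f' x).

Definition clamp (a b x : R) : R := Rmax a (Rmin b x).

Lemma clamp_in : forall a b x, a <= b -> a <= clamp a b x <= b.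
Proof. intros; unfold clamp, Rmax, Rmin; repeat destruct Rle_dec; lra. Qed.

Lemma clamp_id : forall a b x, a <= x <= b -> clamp a b x = x.
Proof. intros; unfold clamp, Rmax, Rmin; repeat destruct Rle_dec; lra. Qed.

Lemma clamp_lip : forall a b x y, a <= b -> Rabs (clamp a b y - clamp a b x) <= Rabs (y - x).
Proof.
  intros; unfold clamp, Rmax, Rmin; repeat destruct Rle_dec;
  unfold Rabs; repeat destruct Rcase_abs; lra.
Qed.

Lemma cont1_clamp : forall a b f, a <= b -> ctw1 a b f ->
  forall x, continuity_pt (fun y => f (clamp a b y)) x.
Proof.
  intros a b f hab hc x.
  unfold continuity_pt, continue_in, limit1_in, limit_in; simpl; unfold R_dist.
  intros eps heps.
  destruct (hc (clamp a b x) (clamp_in a b x hab) eps heps) as [d [hd H]].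
  exists d; split; [lra|].
  intros y [_ hy].
  apply H. apply clamp_in; auto.
  eapply Rle_lt_trans. apply clamp_lip; auto. auto.
Qed.

Lemma cont1_integrable : forall a b f, a <= b -> ctw1 a b f -> Riemann_integrable f a b.
Proof.
  intros a b f hab hc.
  apply Riemann_integrable_ext with (f := fun y => f (clamp a b y)).
  - intros x hx. rewrite Rmin_left in hx by auto. rewrite Rmax_right in hx by auto.
    rewrite clamp_id; auto.
  - apply continuity_implies_RiemannInt; auto.
    intros; apply cont1_clamp; auto.
Qed.

Lemma cont1_sub : forall a b c d f, a <= c -> d <= b -> ctw1 a b f -> ctw1 c d f.
Proof.
  intros a b c d f h1 h2 hc x hx eps heps.
  destruct (hc x ltac:(lra) eps heps) as [de [hde H]].
  exists de; split; auto. intros; apply H; auto; lra.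
Qed.

Lemma contpt_cont1 : forall a b f, (forall x, a <= x <= b -> continuity_pt f x) -> ctw1 a b f.
Proof.
  intros a b f hc x hx eps heps.
  specialize (hc x hx).
  unfold continuity_pt, continue_in, limit1_in, limit_in in hc; simpl in hc; unfold R_dist in hc.
  destruct (hc eps heps) as [d [hd H]].
  exists d; split; [lra|]. intros y hy hyx.
  destruct (Req_dec y x) as [->|ne].
  - rewrite Rminus_diag, Rabs_R0; auto.
  - apply H. split; auto. split; auto. exact I.
Qed.

Lemma RInt_eq : forall f a b (pr : Riemann_integrable f a b), RInt f a b = RiemannInt pr.
Proof.
  intros. unfold RInt. destruct excluded_middle_informative as [H|H].
  - apply RiemannInt_P5.
  - exfalso; apply H; exact (inhabits pr).
Qed.

Lemma RInt_lin : forall f g a b l, Riemann_integrable f a b -> Riemann_integrable g a b ->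
  RInt (fun t => f t + l * g t) a b = RInt f a b + l * RInt g a b.
Proof.
  intros f g a b l hf hg.
  assert (h3 : Riemann_integrable (fun t => f t + l * g t) a b) by (apply RiemannInt_P10; auto).
  rewrite (RInt_eq _ _ _ h3), (RInt_eq _ _ _ hf), (RInt_eq _ _ _ hg).
  apply RiemannInt_P13.
Qed.

Lemma RInt_zero : forall a b, RInt (fun _ => 0) a b = 0.
Proof.
  intros. rewrite (RInt_eq (fun _ => 0) a b (RiemannInt_P14 a b 0)).
  assert (E := RiemannInt_P15 (RiemannInt_P14 a b 0)). change (RiemannInt (RiemannInt_P14 a b 0) = 0). rewrite E; ring.
Qed.

Lemma RInt_const : forall a b c, RInt (fun _ => c) a b = c * (b - a).
Proof.
  intros. rewrite (RInt_eq (fun _ => c) a b (RiemannInt_P14 a b c)).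
  assert (E := RiemannInt_P15 (RiemannInt_P14 a b c)). change (RiemannInt (RiemannInt_P14 a b c) = c * (b - a)). rewrite E; ring.
Qed.

Lemma RInt_plus : forall f g a b, Riemann_integrable f a b -> Riemann_integrable g a b ->
  RInt (fun t => f t + g t) a b = RInt f a b + RInt g a b.
Proof.
  intros. replace (fun t => f t + g t) with (fun t => f t + 1 * g t)
    by (apply functional_extensionality; intros; ring).
  rewrite RInt_lin; auto; ring.
Qed.

Lemma RInt_minus : forall f g a b, Riemann_integrable f a b -> Riemann_integrable g a b ->
  RInt (fun t => f t - g t) a b = RInt f a b - RInt g a b.
Proof.
  intros. replace (fun t => f t - g t) with (fun t => f t + (-1) * g t)
    by (apply functional_extensionality; intros; ring).
  rewrite RInt_lin; auto; ring.
Qed.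

Lemma RInt_scal : forall f a b c, Riemann_integrable f a b ->
  RInt (fun t => c * f t) a b = c * RInt f a b.
Proof.
  intros. replace (fun t => c * f t) with (fun t => (fun _ => 0) t + c * f t)
    by (apply functional_extensionality; intros; ring).
  rewrite RInt_lin; auto. rewrite RInt_zero; ring. apply RiemannInt_P14.
Qed.

Lemma integrable_plus : forall f g a b, Riemann_integrable f a b -> Riemann_integrable g a b ->
  Riemann_integrable (fun t => f t + g t) a b.
Proof.
  intros. apply Riemann_integrable_ext with (f := fun t => f t + 1 * g t).
  intros; ring. apply RiemannInt_P10; auto.
Qed.

Lemma integrable_scal : forall f a b c, Riemann_integrable f a b ->
  Riemann_integrable (fun t => c * f t) a b.
Proof. intros; apply Riemann_integrable_scal; auto. Qed.

Lemma RInt_ext : forall f g a b, a <= b -> (forall t, a <= t <= b -> f t = g t) ->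
  RInt f a b = RInt g a b.
Proof.
  intros f g a b hab H. unfold RInt.
  destruct excluded_middle_informative as [[hf]|hf];
  destruct excluded_middle_informative as [[hg]|hg].
  - apply RiemannInt_P18; auto. intros; apply H; lra.
  - exfalso; apply hg; constructor. apply Riemann_integrable_ext with f; auto.
    intros x hx; rewrite Rmin_left in hx by auto; rewrite Rmax_right in hx by auto; auto.
  - exfalso; apply hf; constructor. apply Riemann_integrable_ext with g; auto.
    intros x hx; rewrite Rmin_left in hx by auto; rewrite Rmax_right in hx by auto; symmetry; auto.
  - reflexivity.
Qed.

Lemma RInt_le : forall f g a b, a <= b -> Riemann_integrable f a b -> Riemann_integrable g a b ->
  (forall t, a <= t <= b -> f t <= g t) -> RInt f a b <= RInt g a b.
Proof.
  intros f g a b hab hf hg H. rewrite (RInt_eq _ _ _ hf), (RInt_eq _ _ _ hg).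
  apply RiemannInt_P19; auto. intros; apply H; lra.
Qed.

Lemma RInt_abs_bound : forall f a b M, a <= b -> Riemann_integrable f a b ->
  (forall t, a <= t <= b -> Rabs (f t) <= M) -> Rabs (RInt f a b) <= M * (b - a).
Proof.
  intros f a b M hab hf H. apply Rabs_le. split.
  - replace (- (M * (b - a))) with (RInt (fun _ => - M) a b) by (rewrite RInt_const; ring).
    apply RInt_le; auto. apply RiemannInt_P14.
    intros t ht; specialize (H t ht); unfold Rabs in H; destruct Rcase_abs in H; lra.
  - rewrite <- RInt_const. apply RInt_le; auto. apply RiemannInt_P14.
    intros t ht; specialize (H t ht); unfold Rabs in H; destruct Rcase_abs in H; lra.
Qed.

Lemma RInt_chasles : forall f a b c, a <= b -> b <= c -> ctw1 a c f ->
  RInt f a b + RInt f b c = RInt f a c.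
Proof.
  intros f a b c h1 h2 hc.
  assert (i1 : Riemann_integrable f a b) by (apply cont1_integrable; auto; eapply cont1_sub; [| |eauto]; lra).
  assert (i2 : Riemann_integrable f b c) by (apply cont1_integrable; auto; eapply cont1_sub; [| |eauto]; lra).
  assert (i3 : Riemann_integrable f a c) by (apply cont1_integrable; auto; lra).
  rewrite (RInt_eq _ _ _ i1), (RInt_eq _ _ _ i2), (RInt_eq _ _ _ i3).
  apply RiemannInt_P26.
Qed.

Lemma integrable_minus : forall f g a b, Riemann_integrable f a b -> Riemann_integrable g a b ->
  Riemann_integrable (fun t => f t - g t) a b.
Proof.
  intros. apply Riemann_integrable_ext with (f := fun t => f t + (-1) * g t).
  intros; ring. apply RiemannInt_P10; auto.
Qed.

Lemma dpl_local : forall f g x l, derivable_pt_lim f x l ->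
  (exists r, 0 < r /\ forall y, Rabs (y - x) < r -> g y = f y) -> derivable_pt_lim g x l.
Proof.
  intros f g x l hf [r [hr hg]] eps heps.
  destruct (hf eps heps) as [d hd].
  assert (hp : 0 < Rmin d r) by (apply Rmin_pos; [apply cond_pos|auto]).
  exists (mkposreal _ hp). intros h hh hlt. simpl in hlt.
  rewrite (hg (x + h)), (hg x).
  - apply hd; auto. eapply Rlt_le_trans; [apply hlt| apply Rmin_l].
  - rewrite Rminus_diag, Rabs_R0; auto.
  - replace (x + h - x) with h by ring. eapply Rlt_le_trans; [apply hlt| apply Rmin_r].
Qed.

Lemma clamp_deriv : forall a b f f' c, a < c < b -> derivable_pt_lim f c (f' c) ->
  derivable_pt_lim (fun y => f (clamp a b y)) c (f' c).
Proof.
  intros a b f f' c hc hd. apply dpl_local with f; auto.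
  exists (Rmin (c - a) (b - c)). split. apply Rmin_pos; lra.
  intros y hy. rewrite clamp_id; auto.
  assert (Rmin (c - a) (b - c) <= c - a) by apply Rmin_l.
  assert (Rmin (c - a) (b - c) <= b - c) by apply Rmin_r.
  unfold Rabs in hy; destruct Rcase_abs in hy; lra.
Qed.

Lemma MVT1 : forall a b f f', a < b -> ctw1 a b f -> dvw1 a b f f' ->
  exists c, a < c < b /\ f b - f a = f' c * (b - a).
Proof.
  intros a b f f' hab hc hd.
  set (fc := fun y => f (clamp a b y)).
  assert (D : forall c, a < c < b -> derivable_pt_lim fc c (f' c)).
  { intros c P. apply clamp_deriv; auto. }
  pose (pr1 := fun c (P : a < c < b) => exist (fun l => derivable_pt_lim fc c l) (f' c) (D c P)).
  destruct (MVT fc id a b pr1 (fun c _ => derivable_pt_id c) hab) as [c [P E]].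
  - intros; apply cont1_clamp; auto; lra.
  - intros; apply derivable_continuous_pt, derivable_pt_id.
  - exists c; split; auto.
    rewrite derive_pt_id in E. unfold derive_pt, pr1 in E; simpl in E.
    unfold fc, id in E. rewrite !clamp_id in E by lra. lra.
Qed.

Lemma FTC1 : forall a b f f', a < b -> ctw1 a b f -> dvw1 a b f f' -> ctw1 a b f' ->
  RInt f' a b = f b - f a.
Proof.
  intros a b f f' hab hc hd hc'.
  set (g := fun y => f' (clamp a b y)).
  assert (hle : a <= b) by lra.
  assert (C0 : forall x, a <= x <= b -> continuity_pt g x) by (intros; apply cont1_clamp; auto).
  set (Psi := primitive hle (FTC_P1 hle C0)).
  assert (DP : forall x, a <= x <= b -> derivable_pt_lim Psi x (g x)) by (intros; apply RiemannInt_P28; auto).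
  assert (ig : Riemann_integrable g a b) by (apply continuity_implies_RiemannInt; auto).
  assert (E1 : RInt f' a b = RiemannInt ig).
  { rewrite <- (RInt_eq _ _ _ ig). apply RInt_ext; auto. intros; unfold g; rewrite clamp_id; auto. }
  rewrite E1, (RiemannInt_P20 hle (FTC_P1 hle C0) ig). fold Psi.
  destruct (MVT1 a b (fun x => Psi x - f x) (fun _ => 0) hab) as [c [hc1 E]].
  - intros x hx eps heps.
    assert (cP : continuity_pt Psi x).
    { apply derivable_continuous_pt. exists (g x). apply DP; auto. }
    destruct (contpt_cont1 a b Psi (fun y hy => derivable_continuous_pt _ _ (exist _ (g y) (DP y hy))) x hx (eps/2) ltac:(lra)) as [d1 [hd1 H1]].
    destruct (hc x hx (eps/2) ltac:(lra)) as [d2 [hd2 H2]].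
    exists (Rmin d1 d2). split. apply Rmin_pos; auto.
    intros y hy hyx.
    assert (Rmin d1 d2 <= d1) by apply Rmin_l. assert (Rmin d1 d2 <= d2) by apply Rmin_r.
    specialize (H1 y hy ltac:(lra)). specialize (H2 y hy ltac:(lra)).
    replace (Psi y - f y - (Psi x - f x)) with ((Psi y - Psi x) - (f y - f x)) by ring.
    eapply Rle_lt_trans. apply Rabs_triang. rewrite Rabs_Ropp. lra.
  - intros x hx.
    replace 0 with (g x - f' x) by (unfold g; rewrite clamp_id; lra).
    apply derivable_pt_lim_minus. apply DP; lra. apply hd; auto.
  - lra.
Qed.

(* tube lemma: uniformity in a compact 1D parameter *)
Lemma tube : forall (X : Type) (BX : X -> Prop) (near : R -> X -> Prop) (h : R -> X -> R) (x0 : X) (a b : R),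
  a <= b ->
  (forall d1 d2 x, d1 <= d2 -> near d1 x -> near d2 x) ->
  (forall d, 0 < d -> near d x0) -> BX x0 ->
  (forall t, a <= t <= b -> forall eps, 0 < eps -> exists delta, 0 < delta /\
     forall t' x, a <= t' <= b -> Rabs (t' - t) < delta -> BX x -> near delta x ->
       Rabs (h t' x - h t x0) < eps) ->
  forall eps, 0 < eps -> exists delta, 0 < delta /\
    forall t x, a <= t <= b -> BX x -> near delta x -> Rabs (h t x - h t x0) < eps.
Proof.
  intros X BX near h x0 a b hab hmono hnear0 hB0 hc eps heps.
  set (E := fun s => a <= s <= b /\ exists delta, 0 < delta /\
     forall t x, a <= t <= s -> BX x -> near delta x -> Rabs (h t x - h t x0) < eps).
  assert (Ea : E a).
  { split; [lra|]. destruct (hc a ltac:(lra) eps heps) as [d [hd H]].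
    exists d; split; auto. intros t x ht hx hn. replace t with a by lra.
    apply H; auto; try lra. rewrite Rminus_diag, Rabs_R0; auto. }
  assert (bE : bound E) by (exists b; intros s [hs _]; lra).
  destruct (completeness E bE (ex_intro _ a Ea)) as [S [hub hlub]].
  assert (haS : a <= S) by (apply hub; auto).
  assert (hSb : S <= b) by (apply hlub; intros s [hs _]; lra).
  destruct (hc S ltac:(lra) (eps/2) ltac:(lra)) as [dS [hdS HS]].
  assert (Hs : exists s, E s /\ S - dS < s).
  { apply Classical_Prop.NNPP; intro N.
    assert (S <= S - dS); [|lra].
    apply hlub. intros s hs. apply Rnot_lt_le. intro hlt. apply N. exists s; auto. }
  destruct Hs as [s [[hs1 [ds [hds Hds]]] hsS]].
  set (s' := Rmin b (S + dS/2)).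
  assert (Es' : E s').
  { split. unfold s'; unfold Rmin; destruct Rle_dec; lra.
    exists (Rmin ds dS). split. apply Rmin_pos; auto.
    intros t x ht hx hn.
    destruct (Rle_dec t s) as [hts|hts].
    - apply Hds; auto; [lra|]. eapply hmono; [|apply hn]. apply Rmin_l.
    - assert (ht' : Rabs (t - S) < dS).
      { assert (s' <= S + dS/2) by apply Rmin_r. unfold Rabs; destruct Rcase_abs; lra. }
      assert (hn' : near dS x) by (eapply hmono; [|apply hn]; apply Rmin_r).
      assert (s' <= b) by apply Rmin_l.
      assert (H1 := HS t x ltac:(lra) ht' hx hn').
      assert (H2 := HS t x0 ltac:(lra) ht' ltac:(auto) (hnear0 dS hdS)).
      replace (h t x - h t x0) with ((h t x - h S x0) - (h t x0 - h S x0)) by ring.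
      eapply Rle_lt_trans. apply Rabs_triang. rewrite Rabs_Ropp. lra. }
  assert (hs'S : s' <= S) by (apply hub; auto).
  assert (hs'b : s' = b).
  { unfold s' in *; unfold Rmin in *; destruct Rle_dec; lra. }
  destruct Es' as [_ [d [hd Hd]]]. exists d; split; auto.
  intros t x ht hx hn. apply Hd; auto. lra.
Qed.

Lemma upd_same : forall x i t, upd x i t i = t.
Proof. intros; unfold upd; rewrite Nat.eqb_refl; auto. Qed.
Lemma upd_other : forall x i t j, j <> i -> upd x i t j = x j.
Proof. intros; unfold upd; destruct (Nat.eqb_spec j i); auto; lia. Qed.
Lemma upd_upd : forall x i s t, upd (upd x i s) i t = upd x i t.
Proof. intros; apply functional_extensionality; intro j; unfold upd; destruct (Nat.eqb_spec j i); auto. Qed.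
Lemma upd_comm : forall x i j s t, i <> j -> upd (upd x i s) j t = upd (upd x j t) i s.
Proof. intros; apply functional_extensionality; intro k; unfold upd;
  destruct (Nat.eqb_spec k i); destruct (Nat.eqb_spec k j); auto; lia. Qed.
Lemma upd_id : forall x i, upd x i (x i) = x.
Proof. intros; apply functional_extensionality; intro j; unfold upd; destruct (Nat.eqb_spec j i); subst; auto. Qed.

Lemma box_int_high : forall d l u f x x', (forall i, (d <= i)%nat -> x i = x' i) ->
  box_int d l u f x = box_int d l u f x'.
Proof.
  induction d; intros l u f x x' H; simpl.
  - f_equal. apply functional_extensionality; intros; apply H; lia.
  - f_equal. apply functional_extensionality; intro t. apply IHd.
    intros i hi. unfold upd. destruct (Nat.eqb_spec i d); auto. apply H; lia.
Qed.

Lemma box_int_bounds : forall d l u l' u' f x, (forall i, (i < d)%nat -> l i = l' i /\ u i = u' i) ->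
  box_int d l u f x = box_int d l' u' f x.
Proof.
  induction d; intros l u l' u' f x H; simpl; auto.
  destruct (H d ltac:(lia)) as [-> ->]. f_equal. apply functional_extensionality; intro t.
  apply IHd. intros; apply H; lia.
Qed.

Fixpoint IntOK (d : nat) (l u : pt) (f : pt -> R) (x : pt) : Prop :=
  match d with
  | O => True
  | S d' => inhabited (Riemann_integrable (fun t => box_int d' l u f (upd x d' t)) (l d') (u d')) /\
            forall t, l d' <= t <= u d' -> IntOK d' l u f (upd x d' t)
  end.

Fixpoint vol (d : nat) (l u : pt) : R :=
  match d with O => 1 | S d' => vol d' l u * (u d' - l d') end.

Section BoxSec.
Variable p : nat.
Variables l u : pt.
Hypothesis hlu : forall i, (i < p)%nat -> l i <= u i.

Lemma box_int_lin : forall d f g c x, (d <= p)%nat -> IntOK d l u f x -> IntOK d l u g x ->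
  box_int d l u (fun y => f y + c * g y) x = box_int d l u f x + c * box_int d l u g x /\
  IntOK d l u (fun y => f y + c * g y) x.
Proof.
  induction d; intros f g c x hd hf hg; simpl; [split; auto|].
  destruct hf as [[if1] hf]; destruct hg as [[ig1] hg].
  assert (hle : l d <= u d) by (apply hlu; lia).
  assert (E : forall t, l d <= t <= u d -> box_int d l u (fun y => f y + c * g y) (upd x d t) =
     box_int d l u f (upd x d t) + c * box_int d l u g (upd x d t)).
  { intros; apply IHd; auto; lia. }
  assert (I : Riemann_integrable (fun t => box_int d l u (fun y => f y + c * g y) (upd x d t)) (l d) (u d)).
  { apply Riemann_integrable_ext with (f := fun t => box_int d l u f (upd x d t) + c * box_int d l u g (upd x d t)).
    intros t ht. rewrite Rmin_left in ht by auto; rewrite Rmax_right in ht by auto. rewrite E; auto.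
    apply RiemannInt_P10; auto. }
  split.
  - rewrite (RInt_ext _ (fun t => box_int d l u f (upd x d t) + c * box_int d l u g (upd x d t))); auto.
    apply RInt_lin; auto.
  - split; [constructor; auto|]. intros; apply IHd; auto; lia.
Qed.

Lemma box_int_plus : forall d f g x, (d <= p)%nat -> IntOK d l u f x -> IntOK d l u g x ->
  box_int d l u (fun y => f y + g y) x = box_int d l u f x + box_int d l u g x /\
  IntOK d l u (fun y => f y + g y) x.
Proof.
  intros. replace (fun y => f y + g y) with (fun y => f y + 1 * g y)
    by (apply functional_extensionality; intros; ring).
  destruct (box_int_lin d f g 1 x); auto. split; auto. rewrite H2; ring.
Qed.

Lemma box_int_zero : forall d x, (d <= p)%nat -> box_int d l u (fun _ => 0) x = 0 /\ IntOK d l u (fun _ => 0) x.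
Proof.
  induction d; intros x hd; simpl; [split; auto|].
  assert (E : forall t, box_int d l u (fun _ => 0) (upd x d t) = 0) by (intros; apply IHd; lia).
  assert (F : (fun t => box_int d l u (fun _ => 0) (upd x d t)) = (fun _ => 0))
    by (apply functional_extensionality; auto).
  rewrite F. split. apply RInt_zero. split. constructor; apply RiemannInt_P14. intros; apply IHd; lia.
Qed.

Lemma box_int_scal : forall d f c x, (d <= p)%nat -> IntOK d l u f x ->
  box_int d l u (fun y => c * f y) x = c * box_int d l u f x /\ IntOK d l u (fun y => c * f y) x.
Proof.
  intros. destruct (box_int_zero d x H) as [z1 z2].
  destruct (box_int_lin d (fun _ => 0) f c x H z2 H0) as [E1 E2].
  replace (fun y => c * f y) with (fun y : pt => 0 + c * f y) by (apply functional_extensionality; intros; ring).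
  split; auto. rewrite E1, z1; ring.
Qed.

Lemma box_int_minus : forall d f g x, (d <= p)%nat -> IntOK d l u f x -> IntOK d l u g x ->
  box_int d l u (fun y => f y - g y) x = box_int d l u f x - box_int d l u g x /\
  IntOK d l u (fun y => f y - g y) x.
Proof.
  intros. replace (fun y => f y - g y) with (fun y => f y + (-1) * g y)
    by (apply functional_extensionality; intros; ring).
  destruct (box_int_lin d f g (-1) x); auto. split; auto. rewrite H2; ring.
Qed.

Definition B := box p l u.

Lemma inB_upd : forall x i t, B x -> (i < p)%nat -> l i <= t <= u i -> B (upd x i t).
Proof.
  intros x i t hx hi ht j. unfold upd. destruct (Nat.eqb_spec j i).
  - subst; split; auto. intros; lia.
  - apply hx.
Qed.

Lemma box_int_ext : forall d f g x, (d <= p)%nat -> (forall y, B y -> f y = g y) -> B x ->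
  box_int d l u f x = box_int d l u g x.
Proof.
  induction d; intros f g x hd H hx; simpl; auto.
  apply RInt_ext. apply hlu; lia.
  intros t ht. apply IHd; auto. lia. apply inB_upd; auto.
Qed.

Lemma IntOK_ext : forall d f g x, (d <= p)%nat -> (forall y, B y -> f y = g y) -> B x ->
  IntOK d l u f x -> IntOK d l u g x.
Proof.
  induction d; intros f g x hd H hx hI; simpl; auto.
  destruct hI as [[hi] hr]. assert (hle : l d <= u d) by (apply hlu; lia). split.
  - constructor. apply Riemann_integrable_ext with (f := fun t => box_int d l u f (upd x d t)); auto.
    intros t ht. rewrite Rmin_left in ht by auto; rewrite Rmax_right in ht by auto.
    apply box_int_ext; auto. lia. apply inB_upd; auto.
  - intros t ht. apply IHd with f; auto. lia. apply inB_upd; auto.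
Qed.

Lemma vol_nonneg : forall d, (d <= p)%nat -> 0 <= vol d l u.
Proof.
  induction d; intros hd; simpl. lra.
  apply Rmult_le_pos. apply IHd; lia. assert (l d <= u d) by (apply hlu; lia). lra.
Qed.

Lemma box_int_abs_bound : forall d f M x, (d <= p)%nat -> IntOK d l u f x -> B x ->
  (forall y, B y -> Rabs (f y) <= M) -> Rabs (box_int d l u f x) <= M * vol d l u.
Proof.
  induction d; intros f M x hd hI hx H; simpl.
  - rewrite Rmult_1_r; auto.
  - destruct hI as [[hi] hr]. assert (hle : l d <= u d) by (apply hlu; lia).
    rewrite <- Rmult_assoc. apply RInt_abs_bound; auto.
    intros t ht. apply IHd; auto. lia. apply inB_upd; auto.
Qed.

Lemma box_int_le : forall d f g x, (d <= p)%nat -> IntOK d l u f x -> IntOK d l u g x -> B x ->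
  (forall y, B y -> f y <= g y) -> box_int d l u f x <= box_int d l u g x.
Proof.
  induction d; intros f g x hd hf hg hx H; simpl; auto.
  destruct hf as [[if1] hf]; destruct hg as [[ig1] hg]. assert (hle : l d <= u d) by (apply hlu; lia).
  apply RInt_le; auto. intros t ht. apply IHd; auto. lia. apply inB_upd; auto.
Qed.

Lemma ctw_line : forall h x i, cont_within p B h -> B x -> (i < p)%nat ->
  ctw1 (l i) (u i) (fun t => h (upd x i t)).
Proof.
  intros h x i hc hx hi t ht eps heps.
  destruct (hc (upd x i t) (inB_upd x i t hx hi ht) eps heps) as [d [hd H]].
  exists d; split; auto. intros y hy hyt. apply H. apply inB_upd; auto.
  intros j hj. unfold upd. destruct (Nat.eqb_spec j i); auto.
  rewrite Rminus_diag, Rabs_R0; auto.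
Qed.

Lemma BC : forall d f, (d <= p)%nat -> cont_within p B f ->
  (forall x, B x -> IntOK d l u f x) /\ cont_within p B (box_int d l u f).
Proof.
  induction d; intros f hd hc; simpl; [split; auto|].
  destruct (IHd f ltac:(lia) hc) as [IH1 IH2].
  assert (hle : l d <= u d) by (apply hlu; lia).
  assert (Hint : forall x, B x -> Riemann_integrable (fun t => box_int d l u f (upd x d t)) (l d) (u d)).
  { intros x hx. apply cont1_integrable; auto. apply ctw_line; auto; lia. }
  split.
  - intros x hx. split; [constructor; auto|]. intros t ht. apply IH1. apply inB_upd; auto; lia.
  - intros x0 hx0 eps heps.
    set (e' := eps / (u d - l d + 1)).
    assert (he' : 0 < e') by (unfold e'; apply Rdiv_lt_0_compat; lra).
    destruct (tube pt B (fun de x => forall i, (i < p)%nat -> Rabs (x i - x0 i) < de)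
       (fun t x => box_int d l u f (upd x d t)) x0 (l d) (u d) hle) with (eps := e') as [de [hde H]]; auto.
    + intros d1 d2 x h12 hn i hi. specialize (hn i hi). lra.
    + intros; rewrite Rminus_diag, Rabs_R0; auto.
    + intros t ht e he.
      destruct (IH2 (upd x0 d t) (inB_upd x0 d t hx0 ltac:(lia) ht) e he) as [dd [hdd Hd]].
      exists dd; split; auto. intros t' x ht' htt hx hn.
      apply Hd. apply inB_upd; auto; lia.
      intros i hi. unfold upd. destruct (Nat.eqb_spec i d); auto.
    + exists de; split; auto. intros y hy hn.
      rewrite <- RInt_minus by auto.
      eapply Rle_lt_trans. apply RInt_abs_bound with (M := e').
      { exact hle. }
      { apply integrable_minus; auto. }
      { intros t ht. left. apply H; auto. }
      assert (e' * (u d - l d + 1) = eps) by (unfold e'; field; lra). nra.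
Qed.

End BoxSec.

Lemma mult_cont2 : forall a b eps, 0 < eps -> exists eta, 0 < eta /\
  forall a' b', Rabs (a' - a) < eta -> Rabs (b' - b) < eta -> Rabs (a' * b' - a * b) < eps.
Proof.
  intros a b eps he.
  set (K := Rabs a + Rabs b + 1).
  assert (hK : 1 <= K) by (unfold K; assert (0 <= Rabs a) by apply Rabs_pos; assert (0 <= Rabs b) by apply Rabs_pos; lra).
  exists (Rmin 1 (eps / (2 * K))). split. apply Rmin_pos. lra. apply Rdiv_lt_0_compat; lra.
  intros a' b' h1 h2.
  assert (m1 : Rmin 1 (eps / (2 * K)) <= 1) by apply Rmin_l.
  assert (m2 : Rmin 1 (eps / (2 * K)) <= eps / (2 * K)) by apply Rmin_r.
  set (e := Rmin 1 (eps / (2*K))) in *.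
  replace (a' * b' - a * b) with (a' * (b' - b) + (a' - a) * b) by ring.
  eapply Rle_lt_trans. apply Rabs_triang. rewrite !Rabs_mult.
  assert (Rabs a' <= Rabs a + 1).
  { replace a' with (a + (a' - a)) by ring. eapply Rle_trans. apply Rabs_triang. lra. }
  assert (0 <= Rabs b) by apply Rabs_pos. assert (0 <= Rabs a) by apply Rabs_pos.
  assert (0 <= Rabs (b' - b)) by apply Rabs_pos. assert (0 <= Rabs (a' - a)) by apply Rabs_pos.
  assert (Rabs a' * Rabs (b' - b) <= (Rabs a + 1) * e) by (apply Rmult_le_compat; auto; try lra; apply Rabs_pos).
  assert (Rabs (a' - a) * Rabs b <= e * Rabs b) by (apply Rmult_le_compat_r; lra).
  assert (e * K <= eps / 2).
  { apply Rle_trans with (eps / (2 * K) * K). apply Rmult_le_compat_r; lra.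
    right. field. lra. }
  unfold K in *. nra.
Qed.

Section ContSec.
Variable p : nat.
Variable S : pt -> Prop.

Lemma cw_op2 : forall (op : R -> R -> R) f g,
  (forall a b eps, 0 < eps -> exists eta, 0 < eta /\
     forall a' b', Rabs (a' - a) < eta -> Rabs (b' - b) < eta -> Rabs (op a' b' - op a b) < eps) ->
  cont_within p S f -> cont_within p S g -> cont_within p S (fun y => op (f y) (g y)).
Proof.
  intros op f g hop hf hg x hx eps heps.
  destruct (hop (f x) (g x) eps heps) as [eta [heta H]].
  destruct (hf x hx eta heta) as [d1 [hd1 H1]].
  destruct (hg x hx eta heta) as [d2 [hd2 H2]].
  exists (Rmin d1 d2); split. apply Rmin_pos; auto.
  intros y hy hn. apply H.
  apply H1; auto. intros i hi; eapply Rlt_le_trans; [apply hn; auto|apply Rmin_l].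
  apply H2; auto. intros i hi; eapply Rlt_le_trans; [apply hn; auto|apply Rmin_r].
Qed.

Lemma cw_mult : forall f g, cont_within p S f -> cont_within p S g -> cont_within p S (fun y => f y * g y).
Proof. intros; apply (cw_op2 Rmult); auto. apply mult_cont2. Qed.

Lemma cw_plus : forall f g, cont_within p S f -> cont_within p S g -> cont_within p S (fun y => f y + g y).
Proof.
  intros; apply (cw_op2 Rplus); auto. intros a b eps he. exists (eps/2); split; [lra|].
  intros a' b' h1 h2. replace (a' + b' - (a + b)) with ((a' - a) + (b' - b)) by ring.
  eapply Rle_lt_trans. apply Rabs_triang. lra.
Qed.

Lemma cw_minus : forall f g, cont_within p S f -> cont_within p S g -> cont_within p S (fun y => f y - g y).
Proof.
  intros; apply (cw_op2 Rminus); auto. intros a b eps he. exists (eps/2); split; [lra|].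
  intros a' b' h1 h2. replace (a' - b' - (a - b)) with ((a' - a) - (b' - b)) by ring.
  eapply Rle_lt_trans. apply Rabs_triang. rewrite Rabs_Ropp. lra.
Qed.

Lemma cw_const : forall c, cont_within p S (fun _ => c).
Proof.
  intros c x hx eps he. exists 1; split; [lra|]. intros. rewrite Rminus_diag, Rabs_R0; auto.
Qed.

Lemma cw_ext : forall f g, (forall y, S y -> f y = g y) -> cont_within p S f -> cont_within p S g.
Proof.
  intros f g E hf x hx eps he. destruct (hf x hx eps he) as [d [hd H]].
  exists d; split; auto. intros y hy hn. rewrite <- !E; auto.
Qed.

Definition Dpw (i : nat) (x : pt) : R -> Prop := fun t => t <> 0 /\ S (upd x i (x i + t)).

Lemma pw_iff : forall i g g', partial_within S i g g' <->
  forall x, S x -> limit1_in (fun t => (g (upd x i (x i + t)) - g x) / t) (Dpw i x) (g' x) 0.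
Proof.
  intros i g g'. unfold partial_within, limit1_in, limit_in, Dpw; simpl; unfold R_dist. split.
  - intros H x hx eps he. destruct (H x hx eps he) as [d [hd Hd]].
    exists d; split; [lra|]. intros t [[ht0 hS] hlt]. rewrite Rminus_0_r in hlt. apply Hd; auto.
  - intros H x hx eps he. destruct (H x hx eps he) as [d [hd Hd]].
    exists d; split; [lra|]. intros t ht0 hlt hS. apply Hd. split; auto. rewrite Rminus_0_r; auto.
Qed.

Lemma limit1_in_ext : forall f1 f2 D l x0, (forall t, D t -> f1 t = f2 t) ->
  limit1_in f1 D l x0 -> limit1_in f2 D l x0.
Proof.
  unfold limit1_in, limit_in; intros f1 f2 D l x0 E H eps he.
  destruct (H eps he) as [a [ha Ha]]. exists a; split; auto.
  intros t ht. rewrite <- E by apply ht. apply Ha; auto.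
Qed.

Lemma limit1_in_val : forall f D l l' x0, l = l' -> limit1_in f D l x0 -> limit1_in f D l' x0.
Proof. intros; subst; auto. Qed.

Lemma pw_plus : forall i f f' g g', partial_within S i f f' -> partial_within S i g g' ->
  partial_within S i (fun y => f y + g y) (fun y => f' y + g' y).
Proof.
  intros i f f' g g' hf hg. rewrite pw_iff in *. intros x hx.
  eapply limit1_in_ext; [|apply limit_plus; [apply hf|apply hg]; auto].
  intros t [ht _]. simpl. field; auto.
Qed.

Lemma pw_mult : forall i f f' g g', partial_within S i f f' -> partial_within S i g g' ->
  partial_within S i (fun y => f y * g y) (fun y => f' y * g y + f y * g' y).
Proof.
  intros i f f' g g' hf hg. rewrite pw_iff in *. intros x hx.
  assert (L1 : limit1_in (fun t => g x + t * ((g (upd x i (x i + t)) - g x) / t)) (Dpw i x) (g x + 0 * g' x) 0).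
  { apply limit_plus. exact (limit_free (fun _ => g x) _ 0 0). apply limit_mul. apply lim_x. apply hg; auto. }
  assert (L2 := limit_mul _ _ _ _ _ _ (hf x hx) L1).
  assert (L3 := limit_plus _ _ _ _ _ _ L2 (limit_mul _ _ _ _ _ _ (limit_free (fun _ => f x) (Dpw i x) 0 0) (hg x hx))).
  eapply limit1_in_val; [|eapply limit1_in_ext; [|apply L3]].
  - simpl. ring.
  - intros t [ht _]. simpl. field; auto.
Qed.

Lemma pw_const : forall i c, partial_within S i (fun _ => c) (fun _ => 0).
Proof.
  intros i c x hx eps he. exists 1; split; [lra|]. intros.
  replace ((c - c) / t - 0) with 0 by (field; auto). rewrite Rabs_R0; auto.
Qed.

Lemma pw_ext : forall i f f' g g', (forall y, S y -> f y = g y) -> (forall y, S y -> f' y = g' y) ->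
  partial_within S i f f' -> partial_within S i g g'.
Proof.
  intros i f f' g g' E E' H x hx eps he. destruct (H x hx eps he) as [d [hd Hd]].
  exists d; split; auto. intros t h0 ht hS. rewrite <- !E, <- E'; auto.
Qed.

Lemma pw_minus : forall i f f' g g', partial_within S i f f' -> partial_within S i g g' ->
  partial_within S i (fun y => f y - g y) (fun y => f' y - g' y).
Proof.
  intros. apply pw_ext with (f := fun y => f y + (-1) * g y) (f' := fun y => f' y + (0 * g y + (-1) * g' y)).
  intros; ring. intros; ring.
  apply pw_plus; auto. apply pw_mult; auto. apply pw_const.
Qed.

End ContSec.

Lemma RInt_quot : forall A Bf C a b s,
  Riemann_integrable A a b -> Riemann_integrable Bf a b -> Riemann_integrable C a b ->
  (RInt A a b - RInt Bf a b) / s - RInt C a b = RInt (fun t => / s * (A t - Bf t) - C t) a b.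
Proof.
  intros. rewrite RInt_minus, RInt_scal, RInt_minus; auto.
  unfold Rdiv; ring. apply integrable_minus; auto. apply integrable_scal, integrable_minus; auto.
Qed.

Section LSec.
Variable p : nat.
Variables l u : pt.
Hypothesis hlu : forall i, (i < p)%nat -> l i <= u i.

Lemma pw_line_deriv : forall H H' y j w0, partial_within (B p l u) j H H' -> B p l u y -> (j < p)%nat ->
  l j < w0 < u j -> derivable_pt_lim (fun w => H (upd y j w)) w0 (H' (upd y j w0)).
Proof.
  intros H H' y j w0 hpw hy hj hw eps he.
  assert (hz : B p l u (upd y j w0)) by (apply inB_upd; auto; lra).
  destruct (hpw _ hz eps he) as [d [hd Hd]].
  assert (hp : 0 < Rmin d (Rmin (w0 - l j) (u j - w0))) by (repeat apply Rmin_pos; lra).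
  exists (mkposreal _ hp). intros h h0 hh. simpl in hh.
  assert (m1 := Rmin_l d (Rmin (w0 - l j) (u j - w0))).
  assert (m2 := Rmin_r d (Rmin (w0 - l j) (u j - w0))).
  assert (m3 := Rmin_l (w0 - l j) (u j - w0)). assert (m4 := Rmin_r (w0 - l j) (u j - w0)).
  specialize (Hd h h0 ltac:(lra)). rewrite upd_same, upd_upd in Hd. apply Hd.
  apply inB_upd; auto. unfold Rabs in hh; destruct Rcase_abs in hh; lra.
Qed.

Lemma LB : forall d j f f', (d <= j)%nat -> (j < p)%nat -> cont_within p (B p l u) f -> cont_within p (B p l u) f' ->
  partial_within (B p l u) j f f' -> partial_within (B p l u) j (box_int d l u f) (box_int d l u f').
Proof.
  induction d; intros j f f' hdj hj hcf hcf' hpw; simpl; auto.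
  assert (IH := IHd j f f' ltac:(lia) hj hcf hcf' hpw).
  destruct (BC p l u hlu d f ltac:(lia) hcf) as [_ cH].
  destruct (BC p l u hlu d f' ltac:(lia) hcf') as [_ cH'].
  set (H := box_int d l u f) in *. set (H' := box_int d l u f') in *.
  assert (hdp : (d < p)%nat) by lia. assert (hjd : j <> d) by lia.
  assert (hle : l d <= u d) by (apply hlu; lia).
  intros x hx eps heps.
  set (e' := eps / (u d - l d + 1)).
  assert (he' : 0 < e') by (unfold e'; apply Rdiv_lt_0_compat; lra).
  destruct (tube pt (B p l u) (fun de y => forall i, (i < p)%nat -> Rabs (y i - x i) < de)
       (fun t y => H' (upd y d t)) x (l d) (u d) hle) with (eps := e') as [de [hde Hde]]; auto.
  { intros d1 d2 y h12 hn i hi. specialize (hn i hi). lra. }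
  { intros; rewrite Rminus_diag, Rabs_R0; auto. }
  { intros t ht e he.
    destruct (cH' (upd x d t) (inB_upd p l u x d t hx hdp ht) e he) as [dd [hdd Hd]].
    exists dd; split; auto. intros t' y ht' htt hy hn.
    apply Hd. apply inB_upd; auto.
    intros i hi. unfold upd. destruct (Nat.eqb_spec i d); auto. }
  exists de. split; auto. intros s hs0 hs hBs.
  set (xs := upd x j (x j + s)) in *.
  assert (hxs : B p l u xs) by auto.
  assert (Ia : forall z, B p l u z -> Riemann_integrable (fun t => H (upd z d t)) (l d) (u d)).
  { intros; apply cont1_integrable; auto; apply (ctw_line p l u); auto. }
  assert (Ib : Riemann_integrable (fun t => H' (upd x d t)) (l d) (u d)).
  { apply cont1_integrable; auto; apply (ctw_line p l u); auto. }
  rewrite RInt_quot; auto.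
  eapply Rle_lt_trans. apply RInt_abs_bound with (M := e'); auto.
  { apply integrable_minus; auto. apply integrable_scal, integrable_minus; auto. }
  2: { assert (e' * (u d - l d + 1) = eps) by (unfold e'; field; lra). nra. }
  intros t ht.
  (* MVT along coordinate j *)
  pose (y := upd x d t).
  assert (hy : B p l u y) by (apply inB_upd; auto).
  assert (Exs : upd xs d t = upd y j (x j + s)) by (unfold xs, y; apply upd_comm; auto).
  assert (Ex : upd x d t = upd y j (x j)).
  { unfold y. rewrite <- upd_comm by auto. rewrite upd_id. auto. }
  rewrite Exs, Ex.
  assert (hxj := proj1 (hx j) hj). assert (hxsj := proj1 (hxs j) hj).
  unfold xs in hxsj; rewrite upd_same in hxsj.
  set (psi := fun w => H (upd y j w)).
  assert (cpsi : ctw1 (l j) (u j) psi) by (apply (ctw_line p l u); auto).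
  assert (dpsi : forall a b, l j <= a -> b <= u j -> dvw1 a b psi (fun w => H' (upd y j w))).
  { intros a b ha hb w hw. apply pw_line_deriv; auto. lra. }
  assert (MV : exists c, Rabs (c - x j) < Rabs s /\ l j <= c <= u j /\
            (psi (x j + s) - psi (x j)) / s = H' (upd y j c)).
  { destruct (Rlt_dec 0 s) as [sp|sn].
    - destruct (MVT1 (x j) (x j + s) psi (fun w => H' (upd y j w))) as [c [hc E]]; try lra.
      eapply cont1_sub; [| |apply cpsi]; lra. apply dpsi; lra.
      exists c. split. unfold Rabs; repeat destruct Rcase_abs; lra. split. lra.
      rewrite E. field. auto.
    - destruct (MVT1 (x j + s) (x j) psi (fun w => H' (upd y j w))) as [c [hc E]].
      assert (s <> 0) by auto. lra.
      eapply cont1_sub; [| |apply cpsi]; lra. apply dpsi; lra.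
      exists c. split. unfold Rabs; repeat destruct Rcase_abs; lra. split. lra.
      replace (psi (x j + s) - psi (x j)) with (- (psi (x j) - psi (x j + s))) by ring.
      rewrite E. field. auto. }
  destruct MV as [c [hc1 [hc2 hc3]]].
  fold (psi (x j + s)). fold (psi (x j)).
  replace (/ s * (psi (x j + s) - psi (x j))) with ((psi (x j + s) - psi (x j)) / s) by (unfold Rdiv; ring).
  rewrite hc3. left.
  assert (E1 : upd y j c = upd (upd x j c) d t) by (unfold y; apply upd_comm; auto).
  assert (E2 : upd y j (x j) = upd x d t) by (rewrite Ex; auto).
  rewrite E1, E2. apply Hde; auto. apply inB_upd; auto.
  intros i hi. unfold upd. destruct (Nat.eqb_spec i j). subst; lra.
  rewrite Rminus_diag, Rabs_R0; auto.
Qed.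

End LSec.

Definition setc (c : mi) (d j : nat) : mi := fun i => if Nat.eqb i d then j else c i.

Lemma fold_plus_ext : forall (A Bf : nat -> R) l, (forall j, In j l -> A j = Bf j) ->
  fold_right Rplus 0 (map A l) = fold_right Rplus 0 (map Bf l).
Proof. intros. f_equal. apply map_ext_in. auto. Qed.

Lemma is_cell_setc : forall d N c j, is_cell d N c -> (j < N d)%nat -> is_cell (S d) N (setc c d j).
Proof.
  intros d N c j hc hj i. unfold setc. destruct (Nat.eqb_spec i d).
  - subst; split; intros; auto; lia.
  - destruct (hc i) as [h1 h2]. split; intros; [apply h1|apply h2]; lia.
Qed.

Lemma fold_rel : forall (Rl : R -> R -> Prop), Rl 0 0 ->
  (forall a b a' b', Rl a b -> Rl a' b' -> Rl (a + a') (b + b')) ->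
  forall (A Bf : nat -> R) l, (forall j, In j l -> Rl (A j) (Bf j)) ->
  Rl (fold_right Rplus 0 (map A l)) (fold_right Rplus 0 (map Bf l)).
Proof.
  intros Rl h0 hp A Bf l. induction l; simpl; intros H; [auto|]. apply hp. apply H; auto. apply IHl; auto.

Qed.

Lemma msum_rel : forall (Rl : R -> R -> Prop), Rl 0 0 ->
  (forall a b a' b', Rl a b -> Rl a' b' -> Rl (a + a') (b + b')) ->
  forall d N F G, (forall c, is_cell d N c -> Rl (F c) (G c)) -> Rl (msum d N F) (msum d N G).
Proof.
  intros Rl h0 hplus. induction d; intros N F G H; simpl.
  - apply H. intros i; split; intros; [lia|reflexivity].
  - apply fold_rel; auto. intros j hj. apply in_seq in hj.
    apply IHd. intros c hc. apply (H (setc c d j)). apply is_cell_setc; auto; lia.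
Qed.

Lemma msum_ext : forall d N F G, (forall c, is_cell d N c -> F c = G c) -> msum d N F = msum d N G.
Proof. intros. apply msum_rel; auto. intros; subst; auto. Qed.

Lemma msum_le : forall d N F G, (forall c, is_cell d N c -> F c <= G c) -> msum d N F <= msum d N G.
Proof. intros. apply msum_rel; auto. lra. intros; lra. Qed.

Lemma msum_zero : forall d N, msum d N (fun _ => 0) = 0.
Proof.
  induction d; intros; simpl; auto.
  induction (seq 0 (N d)); simpl; auto. rewrite IHl, IHd; ring.
Qed.

Lemma msum_zero' : forall d N F, (forall c, is_cell d N c -> F c = 0) -> msum d N F = 0.
Proof. intros. rewrite <- (msum_zero d N). apply msum_ext; auto. Qed.

Lemma fold_plus_distr : forall (A Bf : nat -> R) l,
  fold_right Rplus 0 (map (fun j => A j + Bf j) l) = fold_right Rplus 0 (map A l) + fold_right Rplus 0 (map Bf l).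
Proof. intros; induction l; simpl; [ring|]. rewrite IHl; ring. Qed.

Lemma msum_plus : forall d N F G, msum d N (fun c => F c + G c) = msum d N F + msum d N G.
Proof.
  induction d; intros; simpl; auto.
  rewrite <- fold_plus_distr. f_equal. apply map_ext. intros; apply IHd.
Qed.

Lemma pw_fold : forall Sd i (A A' : nat -> pt -> R) l,
  (forall j, In j l -> partial_within Sd i (A j) (A' j)) ->
  partial_within Sd i (fun x => fold_right Rplus 0 (map (fun j => A j x) l))
                     (fun x => fold_right Rplus 0 (map (fun j => A' j x) l)).
Proof.
  intros Sd i A A' l. induction l; intros H; simpl.
  - apply pw_const.
  - apply (pw_plus Sd i (A a) (A' a)); auto. apply H; simpl; auto. apply IHl; intros; apply H; simpl; auto.
Qed.

Lemma pw_msum : forall Sd i d N (F F' : mi -> pt -> R),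
  (forall c, partial_within Sd i (F c) (F' c)) ->
  partial_within Sd i (fun x => msum d N (fun c => F c x)) (fun x => msum d N (fun c => F' c x)).
Proof.
  intros Sd i. induction d; intros N F F' H; simpl; auto.
  apply (pw_fold Sd i (fun j x => msum d N (fun c => F (fun i0 => if Nat.eqb i0 d then j else c i0) x))
                    (fun j x => msum d N (fun c => F' (fun i0 => if Nat.eqb i0 d then j else c i0) x))).
  intros j _. apply IHd. auto.
Qed.

Lemma fold_mult_c : forall l c, fold_right Rmult c l = fold_right Rmult 1 l * c.
Proof. induction l; intros; simpl; [ring|]. rewrite IHl; ring. Qed.

Lemma mprod_S : forall p F, mprod (S p) F = mprod p F * F p.
Proof.
  intros. unfold mprod. rewrite seq_S, map_app, fold_right_app. simpl.
  rewrite fold_mult_c. ring.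
Qed.

Lemma mprod_ext : forall p F G, (forall j, (j < p)%nat -> F j = G j) -> mprod p F = mprod p G.
Proof.
  induction p; intros; auto. rewrite !mprod_S. rewrite (IHp F G), H; auto.
Qed.

Lemma mprod_split : forall p F i, (i < p)%nat -> mprod p F = F i * mprod p (fun j => if Nat.eqb j i then 1 else F j).
Proof.
  induction p; intros F i hi; [lia|]. rewrite !mprod_S.
  destruct (Nat.eqb_spec p i).
  - subst. rewrite (mprod_ext i (fun j => if Nat.eqb j i then 1 else F j) F).
    ring. intros j hj. destruct (Nat.eqb_spec j i); auto; lia.
  - rewrite (IHp F i) by lia. ring.
Qed.

Lemma mprod_zero : forall p F i, (i < p)%nat -> F i = 0 -> mprod p F = 0.
Proof. intros. rewrite (mprod_split p F i), H0; auto; ring. Qed.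

Fixpoint ff (m a : nat) : R := match a with O => 1 | S a' => ff m a' * INR (m - a') end.

Lemma ff_zero : forall m a, (m < a)%nat -> ff m a = 0.
Proof.
  intros m a; induction a; intros h; [lia|]. simpl.
  destruct (Nat.eq_dec m a).
  - subst. rewrite Nat.sub_diag; simpl; ring.
  - rewrite IHa by lia; ring.
Qed.

Definition Dpoly (p n : nat) (coef : mi -> R) (al : mi) (x : pt) : R :=
  msum p (fun _ => S n) (fun g => coef g * mprod p (fun j => ff (g j) (al j) * x j ^ (g j - al j))).

Lemma pw_from_1d : forall Sd i g g',
  (forall x, Sd x -> exists K phi L, (forall s, g (upd x i s) = K * phi s) /\ g' x = K * L /\
      derivable_pt_lim phi (x i) L) ->
  partial_within Sd i g g'.
Proof.
  intros Sd i g g' H x hx eps he.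
  destruct (H x hx) as [K [phi [L [E1 [E2 E3]]]]].
  assert (hK : 0 < Rabs K + 1) by (assert (0 <= Rabs K) by apply Rabs_pos; lra).
  destruct (E3 (eps / (Rabs K + 1))) as [d hd]. apply Rdiv_lt_0_compat; lra.
  exists d; split. apply cond_pos. intros t h0 ht _.
  rewrite E1, E2. rewrite <- (upd_id x i) at 2. rewrite E1.
  replace ((K * phi (x i + t) - K * phi (x i)) / t - K * L) with (K * ((phi (x i + t) - phi (x i)) / t - L)) by (field; auto).
  rewrite Rabs_mult. specialize (hd t h0 ht).
  assert (0 <= Rabs K) by apply Rabs_pos.
  apply Rle_lt_trans with (Rabs K * (eps / (Rabs K + 1))).
  apply Rmult_le_compat_l; lra.
  apply Rlt_le_trans with ((Rabs K + 1) * (eps / (Rabs K + 1))). assert (0 < eps / (Rabs K + 1)) by (apply Rdiv_lt_0_compat; lra). nra.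
  right; field; lra.
Qed.

Lemma pw_Dpoly : forall Sd p n coef al i, (i < p)%nat ->
  partial_within Sd i (Dpoly p n coef al) (Dpoly p n coef (incr al i)).
Proof.
  intros Sd p n coef al i hi. unfold Dpoly.
  apply (pw_msum Sd i p (fun _ => S n)
    (fun g x => coef g * mprod p (fun j => ff (g j) (al j) * x j ^ (g j - al j)))
    (fun g x => coef g * mprod p (fun j => ff (g j) (incr al i j) * x j ^ (g j - incr al i j)))).
  intros g. apply pw_from_1d. intros x hx.
  set (C := mprod p (fun j => if Nat.eqb j i then 1 else ff (g j) (al j) * x j ^ (g j - al j))).
  exists (coef g * C), (fun s => ff (g i) (al i) * s ^ (g i - al i)),
         (ff (g i) (al i) * (INR (g i - al i) * x i ^ pred (g i - al i))).
  split; [|split].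
  - intros s. rewrite (mprod_split p _ i hi). rewrite upd_same. unfold C.
    rewrite (mprod_ext p (fun j => if Nat.eqb j i then 1 else ff (g j) (al j) * upd x i s j ^ (g j - al j))
                         (fun j => if Nat.eqb j i then 1 else ff (g j) (al j) * x j ^ (g j - al j))). ring.
    intros j hj. destruct (Nat.eqb_spec j i); auto. rewrite upd_other; auto.
  - rewrite (mprod_split p _ i hi). unfold C.
    rewrite (mprod_ext p (fun j => if Nat.eqb j i then 1 else ff (g j) (incr al i j) * x j ^ (g j - incr al i j))
                         (fun j => if Nat.eqb j i then 1 else ff (g j) (al j) * x j ^ (g j - al j))).
    unfold incr. rewrite Nat.eqb_refl. simpl.
    replace (g i - S (al i))%nat with (pred (g i - al i)) by lia. ring.
    intros j hj. unfold incr. destruct (Nat.eqb_spec j i); auto.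
  - apply derivable_pt_lim_scal. apply derivable_pt_lim_pow.
Qed.

Lemma Dpoly_vanish : forall p n coef al i x, (i < p)%nat -> (S n <= al i)%nat -> Dpoly p n coef al x = 0.
Proof.
  intros. unfold Dpoly. apply msum_zero'. intros g hg.
  rewrite (mprod_zero p _ i); auto. ring.
  rewrite ff_zero. ring. destruct (hg i) as [h _]. specialize (h H). lia.
Qed.

Lemma Dpoly_0 : forall p n coef x,
  Dpoly p n coef mi0 x = msum p (fun _ => S n) (fun g => coef g * mprod p (fun i => x i ^ g i)).
Proof.
  intros. unfold Dpoly. f_equal. apply functional_extensionality; intro g. f_equal.
  apply mprod_ext. intros. unfold mi0; simpl. rewrite Nat.sub_0_r. ring.
Qed.

Inductive reach (p : nat) : mi -> Prop :=
| reach0 : reach p mi0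
| reachS : forall al i, reach p al -> (i < p)%nat -> reach p (incr al i).

Definition addm (al : mi) (i m : nat) : mi := fun j => if Nat.eqb j i then (al j + m)%nat else al j.

Lemma addm_0 : forall al i, addm al i 0 = al.
Proof. intros; apply functional_extensionality; intro j; unfold addm; destruct (Nat.eqb_spec j i); auto. Qed.

Lemma addm_S : forall al i m, addm al i (S m) = incr (addm al i m) i.
Proof. intros; apply functional_extensionality; intro j; unfold addm, incr; destruct (Nat.eqb_spec j i); auto; lia. Qed.

Lemma reach_addm : forall p al i m, reach p al -> (i < p)%nat -> reach p (addm al i m).
Proof. induction m; intros. rewrite addm_0; auto. rewrite addm_S. constructor; auto. Qed.

Lemma reach_low : forall p d al, (d <= p)%nat -> (forall i, (d <= i)%nat -> al i = 0%nat) -> reach p al.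
Proof.
  intros p d. induction d; intros al hd H.
  - replace al with mi0. constructor. apply functional_extensionality; intro; symmetry; apply H; lia.
  - set (al' := fun j => if Nat.eqb j d then 0%nat else al j).
    assert (E : al = addm al' d (al d)).
    { apply functional_extensionality; intro j; unfold addm, al'; destruct (Nat.eqb_spec j d); subst; auto. }
    rewrite E. apply reach_addm; [|lia]. apply IHd; [lia|].
    intros i hi. unfold al'. destruct (Nat.eqb_spec i d); auto. apply H; lia.
Qed.

Lemma reach_beta : forall p k, reach p (beta p k).
Proof.
  intros. apply (reach_low p p); auto. intros i hi. unfold beta.
  destruct (Nat.ltb_spec i p); auto; lia.
Qed.

Lemma eq_eps : forall a b, (forall eps, 0 < eps -> Rabs (a - b) < eps) -> a = b.
Proof.
  intros a b H. destruct (Req_dec a b); auto. exfalso.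
  assert (0 < Rabs (a - b)) by (apply Rabs_pos_lt; lra).
  specialize (H _ H1). lra.
Qed.

Section USec.
Variable p : nat.
Variables l u : pt.
Hypothesis hlt : forall i, (i < p)%nat -> l i < u i.

Lemma pw_unique : forall j g g1 g2 x, (j < p)%nat -> partial_within (B p l u) j g g1 ->
  partial_within (B p l u) j g g2 -> B p l u x -> g1 x = g2 x.
Proof.
  intros j g g1 g2 x hj h1 h2 hx. apply eq_eps. intros eps he.
  destruct (h1 x hx (eps/2) ltac:(lra)) as [d1 [hd1 H1]].
  destruct (h2 x hx (eps/2) ltac:(lra)) as [d2 [hd2 H2]].
  assert (hxj := proj1 (hx j) hj). assert (hl := hlt j hj).
  set (m := Rmin (Rmin d1 d2) (u j - l j)).
  assert (hm : 0 < m) by (unfold m; repeat apply Rmin_pos; lra).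
  assert (m1 : m <= Rmin d1 d2) by apply Rmin_l. assert (m2 : m <= u j - l j) by apply Rmin_r.
  assert (m3 : Rmin d1 d2 <= d1) by apply Rmin_l. assert (m4 : Rmin d1 d2 <= d2) by apply Rmin_r.
  assert (T : exists t, t <> 0 /\ Rabs t < d1 /\ Rabs t < d2 /\ B p l u (upd x j (x j + t))).
  { destruct (Rlt_dec (x j) (u j)) as [hu|hu].
    - exists (Rmin (m/2) (u j - x j)).
      assert (r1 := Rmin_l (m/2) (u j - x j)). assert (r2 := Rmin_r (m/2) (u j - x j)).
      assert (0 < Rmin (m/2) (u j - x j)) by (apply Rmin_pos; lra).
      rewrite Rabs_right by lra. split; [lra|]. split; [lra|]. split; [lra|].
      apply inB_upd; auto. lra.
    - exists (- (m/2)). rewrite Rabs_Ropp, Rabs_right by lra. split; [lra|]. split; [lra|]. split; [lra|].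
      apply inB_upd; auto. lra. }
  destruct T as [t [t0 [t1 [t2 t3]]]].
  specialize (H1 t t0 t1 t3). specialize (H2 t t0 t2 t3).
  replace (g1 x - g2 x) with (- ((g (upd x j (x j + t)) - g x) / t - g1 x) + ((g (upd x j (x j + t)) - g x) / t - g2 x)) by ring.
  eapply Rle_lt_trans. apply Rabs_triang. rewrite Rabs_Ropp. lra.
Qed.

Lemma DH_poly : forall n coef P DH, smooth_on p (B p l u) P DH ->
  (forall x, B p l u x -> P x = Dpoly p n coef mi0 x) ->
  forall al, reach p al -> forall x, B p l u x -> DH al x = Dpoly p n coef al x.
Proof.
  intros n coef P DH [s1 [s2 s3]] hP al hr. induction hr; intros x hx.
  - rewrite s1; auto.
  - apply (pw_unique i (DH al)); auto.
    apply pw_ext with (f := Dpoly p n coef al) (f' := Dpoly p n coef (incr al i)).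
    intros; symmetry; auto. intros; auto. apply pw_Dpoly; auto.
Qed.

End USec.

Section OSec.
Variable p : nat.
Variables l u : pt.
Hypothesis hlt : forall i, (i < p)%nat -> l i < u i.
Variable k : nat.
Variables DH DS : mi -> pt -> R.
Hypothesis cH : forall al, cont_within p (B p l u) (DH al).
Hypothesis pH : forall al i, (i < p)%nat -> partial_within (B p l u) i (DH al) (DH (incr al i)).
Hypothesis cS : forall al, cont_within p (B p l u) (DS al).
Hypothesis pS : forall al i, (i < p)%nat -> partial_within (B p l u) i (DS al) (DS (incr al i)).
Hypothesis vanH : forall al, reach p al -> forall i, (i < p)%nat -> (2 * k + 2 <= al i)%nat ->
  forall x, B p l u x -> DH al x = 0.
Hypothesis vert : forall g x, mi_le p k g -> B p l u x -> (forall i, (i < p)%nat -> x i = l i \/ x i = u i) ->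
  DS g x = DH g x.

Lemma hlu : forall i, (i < p)%nat -> l i <= u i.
Proof. intros; apply Rlt_le, hlt; auto. Qed.

Definition De (g : mi) (y : pt) : R := DS g y - DH g y.
Definition Fp (a g : mi) (y : pt) : R := DH a y * De g y.

Lemma cF : forall a g, cont_within p (B p l u) (Fp a g).
Proof. intros. unfold Fp, De. apply cw_mult; auto. apply cw_minus; auto. Qed.

Lemma pF : forall a g i, (i < p)%nat ->
  partial_within (B p l u) i (Fp a g) (fun y => Fp (incr a i) g y + Fp a (incr g i) y).
Proof.
  intros. unfold Fp, De. apply (pw_mult (B p l u) i (DH a) (DH (incr a i))); auto.
  apply pw_minus; auto.
Qed.

Lemma claim : forall d, (d <= p)%nat -> forall x a g, B p l u x ->
  (forall i, (d <= i)%nat -> (i < p)%nat -> x i = l i \/ x i = u i) ->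
  reach p a -> (forall i, (i < d)%nat -> (k + 1 <= a i)%nat) ->
  (forall i, (i < d)%nat -> g i = (k + 1)%nat) ->
  (forall i, (d <= i)%nat -> (i < p)%nat -> (g i <= k)%nat) ->
  (forall i, (p <= i)%nat -> g i = 0%nat) ->
  box_int d l u (Fp a g) x = 0.
Proof.
  induction d; intros hd x a g hx hv ha hak hgk hgl hg0; simpl.
  - unfold Fp, De. rewrite vert; [ring| | |]; auto.
    + intros i; split; intros; [apply hgl; lia| apply hg0; auto].
    + intros; apply hv; auto; lia.
  - assert (hdp : (d < p)%nat) by lia.
    assert (hle : l d <= u d) by (apply hlu; auto).
    assert (hltd : l d < u d) by (apply hlt; auto).
    (* integration by parts step *)
    assert (IBP : forall a' g', reach p a' -> (forall i, (i < d)%nat -> (k + 1 <= a' i)%nat) ->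
      (forall i, (i < d)%nat -> g' i = (k + 1)%nat) -> (g' d <= k)%nat ->
      (forall i, (S d <= i)%nat -> (i < p)%nat -> (g' i <= k)%nat) ->
      (forall i, (p <= i)%nat -> g' i = 0%nat) ->
      RInt (fun t => box_int d l u (Fp a' (incr g' d)) (upd x d t)) (l d) (u d) =
      - RInt (fun t => box_int d l u (Fp (incr a' d) g') (upd x d t)) (l d) (u d)).
    { intros a' g' ha' hak' hgk' hgd hgl' hg0'.
      set (F' := fun y => Fp (incr a' d) g' y + Fp a' (incr g' d) y).
      assert (cF' : cont_within p (B p l u) F') by (apply cw_plus; apply cF).
      destruct (BC p l u hlu d (Fp a' g') ltac:(lia) (cF a' g')) as [I0 C0].
      destruct (BC p l u hlu d F' ltac:(lia) cF') as [I1 C1].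
      destruct (BC p l u hlu d _ ltac:(lia) (cF (incr a' d) g')) as [I2 C2].
      destruct (BC p l u hlu d _ ltac:(lia) (cF a' (incr g' d))) as [I3 C3].
      assert (L : partial_within (B p l u) d (box_int d l u (Fp a' g')) (box_int d l u F')).
      { apply LB; auto. apply hlu. apply cF. apply pF; auto. }
      assert (FT : RInt (fun t => box_int d l u F' (upd x d t)) (l d) (u d) =
         box_int d l u (Fp a' g') (upd x d (u d)) - box_int d l u (Fp a' g') (upd x d (l d))).
      { apply (FTC1 (l d) (u d) (fun t => box_int d l u (Fp a' g') (upd x d t))
                      (fun t => box_int d l u F' (upd x d t)) hltd).
        - apply (ctw_line p l u); auto.
        - intros w hw. apply (pw_line_deriv p l u); auto.
        - apply (ctw_line p l u); auto. }
      assert (E : forall t, l d <= t <= u d -> box_int d l u F' (upd x d t) =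
         box_int d l u (Fp (incr a' d) g') (upd x d t) + box_int d l u (Fp a' (incr g' d)) (upd x d t)).
      { intros t ht. unfold F'. refine (proj1 (box_int_plus p l u hlu d _ _ _ _ _ _)); [lia | apply I2, inB_upd; auto | apply I3, inB_upd; auto]. }
      assert (FT2 : RInt (fun t => box_int d l u (Fp (incr a' d) g') (upd x d t) + box_int d l u (Fp a' (incr g' d)) (upd x d t)) (l d) (u d) =
         box_int d l u (Fp a' g') (upd x d (u d)) - box_int d l u (Fp a' g') (upd x d (l d))).
      { rewrite <- FT. symmetry. apply RInt_ext; auto. }
      clear FT. rename FT2 into FT.
      rewrite RInt_plus in FT.
      2,3: apply cont1_integrable; auto; apply (ctw_line p l u); auto.
      rewrite (IHd ltac:(lia) (upd x d (u d)) a' g'), (IHd ltac:(lia) (upd x d (l d)) a' g') in FT; auto.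
      - lra.
      - apply inB_upd; auto. lra.
      - intros i hi1 hi2. unfold upd. destruct (Nat.eqb_spec i d). left; auto. apply hv; lia.
      - intros i hi1 hi2. destruct (Nat.eq_dec i d). subst; auto. apply hgl'; lia.
      - apply inB_upd; auto. lra.
      - intros i hi1 hi2. unfold upd. destruct (Nat.eqb_spec i d). right; auto. apply hv; lia.
      - intros i hi1 hi2. destruct (Nat.eq_dec i d). subst; auto. apply hgl'; lia. }
    set (Q := fun m => RInt (fun t => box_int d l u (Fp (addm a d m) (setc g d (k + 1 - m))) (upd x d t)) (l d) (u d)).
    assert (QS : forall m, (m <= k)%nat -> Q m = - Q (S m)).
    { intros m hm. unfold Q.
      replace (setc g d (k + 1 - m)) with (incr (setc g d (k - m)) d).
      replace (setc g d (k + 1 - S m)) with (setc g d (k - m)) by (f_equal; lia).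
      rewrite addm_S. apply IBP.
      - apply reach_addm; auto.
      - intros i hi. unfold addm. destruct (Nat.eqb_spec i d); [lia|]. apply hak; lia.
      - intros i hi. unfold setc. destruct (Nat.eqb_spec i d); [lia|]. apply hgk; lia.
      - unfold setc. rewrite Nat.eqb_refl. lia.
      - intros i hi1 hi2. unfold setc. destruct (Nat.eqb_spec i d); [lia|]. apply hgl; lia.
      - intros i hi. unfold setc. destruct (Nat.eqb_spec i d); [lia|]. apply hg0; lia.
      - apply functional_extensionality; intro i. unfold incr, setc.
        destruct (Nat.eqb_spec i d); auto. lia. }
    assert (QL : Q (k + 1)%nat = 0).
    { unfold Q. rewrite <- (RInt_zero (l d) (u d)). apply RInt_ext; auto.
      intros t ht. rewrite (box_int_ext p l u hlu d _ (fun _ => 0)); [apply (box_int_zero p l u); lia | lia | | apply inB_upd; auto].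
      intros y hy. unfold Fp. rewrite (vanH (addm a d (k + 1)) (reach_addm p a d _ ha hdp) d hdp); auto. ring.
      unfold addm. rewrite Nat.eqb_refl. assert (k + 1 <= a d)%nat by (apply hak; lia). lia. }
    assert (QA : forall j, (j <= k + 1)%nat -> Q (k + 1 - j)%nat = 0).
    { induction j; intros hj. rewrite Nat.sub_0_r; auto.
      rewrite QS by lia. replace (S (k + 1 - S j)) with (k + 1 - j)%nat by lia. rewrite IHj by lia. ring. }
    specialize (QA (k + 1)%nat (le_n _)). rewrite Nat.sub_diag in QA.
    unfold Q in QA. rewrite addm_0 in QA.
    replace (setc g d (k + 1 - 0)) with g in QA; auto.
    apply functional_extensionality; intro i. unfold setc. destruct (Nat.eqb_spec i d); auto.
    subst. rewrite hgk; lia.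
Qed.

Lemma beta_lt : forall i, (i < p)%nat -> beta p k i = S k.
Proof. intros; unfold beta; destruct (Nat.ltb_spec i p); auto; lia. Qed.
Lemma beta_ge : forall i, (p <= i)%nat -> beta p k i = 0%nat.
Proof. intros; unfold beta; destruct (Nat.ltb_spec i p); auto; lia. Qed.

Lemma cell_ineq : forall x0, B p l u x0 ->
  box_int p l u (fun y => (DH (beta p k) y) ^ 2) x0 <= box_int p l u (fun y => (DS (beta p k) y) ^ 2) x0.
Proof.
  intros x0 hx0. set (be := beta p k).
  set (f1 := fun y => DH be y ^ 2). set (f2 := Fp be be). set (f3 := fun y => De be y ^ 2).
  assert (c1 : cont_within p (B p l u) f1).
  { apply cw_ext with (fun y => DH be y * DH be y). intros; unfold f1; ring. apply cw_mult; auto. }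
  assert (c2 : cont_within p (B p l u) f2) by apply cF.
  assert (c3 : cont_within p (B p l u) f3).
  { apply cw_ext with (fun y => De be y * De be y). intros; unfold f3; ring.
    unfold De; apply cw_mult; apply cw_minus; auto. }
  destruct (BC p l u hlu p f1 (le_n _) c1) as [I1 _].
  destruct (BC p l u hlu p f2 (le_n _) c2) as [I2 _].
  destruct (BC p l u hlu p f3 (le_n _) c3) as [I3 _].
  destruct (box_int_lin p l u hlu p f1 f2 2 x0 (le_n _) (I1 x0 hx0) (I2 x0 hx0)) as [E1 I12].
  destruct (box_int_lin p l u hlu p (fun y => f1 y + 2 * f2 y) f3 1 x0 (le_n _) I12 (I3 x0 hx0)) as [E2 _].
  rewrite (box_int_ext p l u hlu p (fun y => DS be y ^ 2) (fun y => (f1 y + 2 * f2 y) + 1 * f3 y)); auto.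
  2: { intros y hy. unfold f1, f2, f3, Fp, De. ring. }
  rewrite E2, E1.
  assert (Z : box_int p l u f2 x0 = 0).
  { apply claim; auto.
    - intros; lia.
    - apply reach_beta.
    - intros i hi. unfold be. rewrite beta_lt; auto; lia.
    - intros i hi. unfold be. rewrite beta_lt; auto; lia.
    - intros; lia.
    - intros i hi. unfold be. apply beta_ge; auto. }
  assert (P3 : 0 <= box_int p l u f3 x0).
  { rewrite <- (proj1 (box_int_zero p l u p x0 (le_n _))).
    apply (box_int_le p l u hlu); auto. apply (box_int_zero p l u); auto. intros y hy. unfold f3. apply pow2_ge_0. }
  fold f1. rewrite Z. lra.
Qed.
End OSec.

Lemma cell_bounds : forall a b N c i, a i < b i -> (0 < N i)%nat -> (c i < N i)%nat ->
  a i <= cell_lo a b N c i /\ cell_lo a b N c i < cell_hi a b N c i /\ cell_hi a b N c i <= b i.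
Proof.
  intros a b N c i hab hN hc. unfold cell_lo, cell_hi.
  assert (hNr : 0 < INR (N i)) by (apply lt_0_INR; auto).
  set (h := (b i - a i) / INR (N i)).
  assert (hh : 0 < h) by (unfold h; apply Rdiv_lt_0_compat; lra).
  assert (0 <= INR (c i)) by apply pos_INR.
  assert (INR (S (c i)) <= INR (N i)) by (apply le_INR; lia).
  rewrite S_INR in *. split; [nra|split; [nra|]].
  assert (INR (N i) * h = b i - a i) by (unfold h; field; lra). nra.
Qed.

Lemma smooth_sub : forall p S S' f D, (forall x, S' x -> S x) -> smooth_on p S f D -> smooth_on p S' f D.
Proof.
  intros p S S' f D hS [s1 [s2 s3]]. split; [|split].
  - intros; auto.
  - intros al i hi x hx eps he. destruct (s2 al i hi x (hS x hx) eps he) as [d [hd H]].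
    exists d; split; auto.
  - intros al x hx eps he. destruct (s3 al x (hS x hx) eps he) as [d [hd H]].
    exists d; split; auto.
Qed.

Definition lowpt (p : nat) (l : pt) : pt := fun i => if Nat.ltb i p then l i else 0.

Lemma lowpt_in : forall p l u, (forall i, (i < p)%nat -> l i <= u i) -> B p l u (lowpt p l).
Proof.
  intros p l u h i. unfold lowpt. destruct (Nat.ltb_spec i p); split; intros; try lia; auto.
  split; [lra|auto].
Qed.

Lemma integral_low : forall p l u g, integral p l u g = box_int p l u g (lowpt p l).
Proof.
  intros. unfold integral. apply box_int_high. intros i hi. unfold lowpt.
  destruct (Nat.ltb_spec i p); auto; lia.
Qed.

Lemma per_cell : forall p k a b N c, (forall i, (i < p)%nat -> a i < b i) ->
  (forall i, (i < p)%nat -> (0 < N i)%nat) -> is_cell p N c ->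
  forall (Dphi : mi -> pt -> R) P DP psi Dpsi,
  is_pn_poly p (2 * k + 1) P -> smooth_on p (cell_box p a b N c) P DP ->
  (forall al v, mi_le p k al -> is_vertex p a b N c v -> DP al v = Dphi al v) ->
  smooth_on p (cell_box p a b N c) psi Dpsi ->
  (forall al v, mi_le p k al -> is_vertex p a b N c v -> Dpsi al v = Dphi al v) ->
  integral p (cell_lo a b N c) (cell_hi a b N c) (fun x => (DP (beta p k) x) ^ 2) <=
  integral p (cell_lo a b N c) (cell_hi a b N c) (fun x => (Dpsi (beta p k) x) ^ 2).
Proof.
  intros p k a b N c hab hN hc Dphi P DP psi Dpsi hpoly sP vP sS vS.
  set (l := cell_lo a b N c) in *. set (u := cell_hi a b N c) in *.
  assert (hlt : forall i, (i < p)%nat -> l i < u i).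
  { intros i hi. destruct (hc i) as [h _]. apply (cell_bounds a b N c i); auto. }
  assert (hlu : forall i, (i < p)%nat -> l i <= u i) by (intros; apply Rlt_le; auto).
  change (cell_box p a b N c) with (B p l u) in *.
  destruct hpoly as [coef hcoef].
  rewrite !integral_low.
  destruct sP as [p1 [p2 p3]]. destruct sS as [q1 [q2 q3]].
  apply (cell_ineq p l u hlt k DP Dpsi); auto.
  - intros al hr i hi hal x hx.
    rewrite (DH_poly p l u hlt (2 * k + 1) coef P DP); auto.
    + apply Dpoly_vanish with i; auto. lia.
    + split; [|split]; auto.
    + intros y hy. rewrite Dpoly_0. apply hcoef.
  - intros g x hg hx hv.
    assert (hvx : is_vertex p a b N c x).
    { intros i; split; intros hi. apply hv; auto. apply (proj2 (hx i)); auto. }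
    rewrite vP, vS; auto.
  - apply lowpt_in; auto.
Qed.

Lemma fold_app : forall (A : nat -> R) l1 l2,
  fold_right Rplus 0 (map A (l1 ++ l2)) = fold_right Rplus 0 (map A l1) + fold_right Rplus 0 (map A l2).
Proof. intros; induction l1; simpl; [ring|]. rewrite IHl1; ring. Qed.

Lemma RInt_split : forall f a b N, a < b -> (0 < N)%nat -> ctw1 a b f ->
  RInt f a b = fold_right Rplus 0 (map (fun j => RInt f (a + INR j * ((b - a) / INR N)) (a + INR (S j) * ((b - a) / INR N))) (seq 0 N)).
Proof.
  intros f a b N hab hN hc.
  set (h := (b - a) / INR N).
  assert (hNr : 0 < INR N) by (apply lt_0_INR; auto).
  assert (hh : 0 < h) by (unfold h; apply Rdiv_lt_0_compat; lra).
  assert (hNh : INR N * h = b - a) by (unfold h; field; lra).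
  assert (G : forall M, (M <= N)%nat -> RInt f a (a + INR M * h) =
     fold_right Rplus 0 (map (fun j => RInt f (a + INR j * h) (a + INR (S j) * h)) (seq 0 M))).
  { induction M; intros hM.
    - simpl. replace (a + 0 * h) with a by ring.
      assert (E := RInt_chasles f a a a (Rle_refl _) (Rle_refl _) ltac:(eapply cont1_sub; [| |apply hc]; lra)). lra.
    - rewrite seq_S, fold_app. rewrite <- IHM by lia. cbn [map fold_right]. rewrite Nat.add_0_l.
      assert (INR M <= INR N) by (apply le_INR; lia).
      assert (INR (S M) <= INR N) by (apply le_INR; lia).
      rewrite S_INR in *.
      assert (0 <= INR M) by apply pos_INR.
      assert (0 <= INR M * h) by (apply Rmult_le_pos; lra).
      assert ((INR M + 1) * h <= INR N * h) by (apply Rmult_le_compat_r; lra).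
      assert ((INR M + 1) * h = INR M * h + h) by ring.
      rewrite Rplus_0_r. symmetry. apply RInt_chasles. lra. lra.
      apply (cont1_sub a b); [lra|lra|exact hc]. }
  rewrite <- G; auto. f_equal. rewrite hNh; ring.
Qed.

Lemma RInt_fold : forall (A : nat -> R -> R) al be l, al <= be ->
  (forall j, In j l -> inhabited (Riemann_integrable (A j) al be)) ->
  inhabited (Riemann_integrable (fun t => fold_right Rplus 0 (map (fun j => A j t) l)) al be) /\
  RInt (fun t => fold_right Rplus 0 (map (fun j => A j t) l)) al be = fold_right Rplus 0 (map (fun j => RInt (A j) al be) l).
Proof.
  intros A al be l hab. induction l; intros H; simpl.
  - split. constructor; apply RiemannInt_P14. apply RInt_zero.
  - destruct IHl as [[I] E]. intros; apply H; simpl; auto.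
    destruct (H a (or_introl eq_refl)) as [Ia].
    split. constructor; apply integrable_plus; auto.
    rewrite RInt_plus; auto. rewrite E; auto.
Qed.

Lemma RInt_msum : forall d N (F : mi -> R -> R) al be, al <= be ->
  (forall c, is_cell d N c -> inhabited (Riemann_integrable (F c) al be)) ->
  inhabited (Riemann_integrable (fun t => msum d N (fun c => F c t)) al be) /\
  RInt (fun t => msum d N (fun c => F c t)) al be = msum d N (fun c => RInt (F c) al be).
Proof.
  induction d; intros N F al be hab H; simpl.
  - split; auto. apply H. intros i; split; intros; [lia|auto].
  - assert (K : forall j, In j (seq 0 (N d)) -> inhabited (Riemann_integrable (fun t => msum d N (fun c => F (setc c d j) t)) al be)).
    { intros j hj. apply in_seq in hj. apply IHd; auto. intros c hc. apply H. apply is_cell_setc; auto; lia. }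
    destruct (RInt_fold (fun j t => msum d N (fun c => F (setc c d j) t)) al be (seq 0 (N d)) hab K) as [I E].
    unfold setc in I, E. split; [exact I|]. rewrite E. apply fold_plus_ext. intros j hj. apply in_seq in hj.
    apply IHd; auto. intros c hc. apply H. apply is_cell_setc; auto; lia.
Qed.

Lemma msum_fold_exch : forall d N (Hf : mi -> nat -> R) l,
  msum d N (fun c => fold_right Rplus 0 (map (fun j => Hf c j) l)) =
  fold_right Rplus 0 (map (fun j => msum d N (fun c => Hf c j)) l).
Proof.
  intros d N Hf l. induction l; simpl.
  - apply msum_zero.
  - rewrite msum_plus, IHl. auto.
Qed.

Section AddSec.
Variable p : nat.
Variables a b : pt.
Variable N : nat -> nat.
Hypothesis hab : forall i, (i < p)%nat -> a i < b i.
Hypothesis hN : forall i, (i < p)%nat -> (0 < N i)%nat.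
Variable g : pt -> R.
Hypothesis hg : cont_within p (box p a b) g.

Definition mixl (d : nat) (c : mi) : pt := fun i => if Nat.ltb i d then cell_lo a b N c i else a i.
Definition mixu (d : nat) (c : mi) : pt := fun i => if Nat.ltb i d then cell_hi a b N c i else b i.

Lemma cell_line : forall d c x, (d < p)%nat -> is_cell d N c -> B p a b x ->
  ctw1 (a d) (b d) (fun t => box_int d (cell_lo a b N c) (cell_hi a b N c) g (upd x d t)).
Proof.
  intros d c x hd hc hx.
  assert (hmix : forall i, (i < p)%nat -> mixl d c i <= mixu d c i /\ a i <= mixl d c i /\ mixu d c i <= b i).
  { intros i hi. unfold mixl, mixu. destruct (Nat.ltb_spec i d).
    - destruct (cell_bounds a b N c i) as [h1 [h2 h3]]; auto. apply (proj1 (hc i)); auto. lra.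
    - assert (a i < b i) by auto. lra. }
  assert (hlu : forall i, (i < p)%nat -> mixl d c i <= mixu d c i) by (intros; apply hmix; auto).
  assert (sub : forall y, B p (mixl d c) (mixu d c) y -> box p a b y).
  { intros y hy i. destruct (hy i) as [h1 h2]. split; auto. intros hi. specialize (hmix i hi). specialize (h1 hi). lra. }
  assert (hg' : cont_within p (B p (mixl d c) (mixu d c)) g).
  { intros y hy eps he. destruct (hg y (sub y hy) eps he) as [de [hde H]]. exists de; split; auto. }
  destruct (BC p (mixl d c) (mixu d c) hlu d g ltac:(lia) hg') as [_ C].
  set (x' := fun i => if Nat.ltb i d then mixl d c i else x i).
  assert (hx' : B p (mixl d c) (mixu d c) x').
  { intros i. unfold x'. destruct (Nat.ltb_spec i d); split; intros; try lia.
    - split; [lra|]. apply hmix; auto.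
    - unfold mixl, mixu. destruct (Nat.ltb_spec i d); try lia. apply hx; auto.
    - apply hx; auto. }
  assert (L := ctw_line p (mixl d c) (mixu d c) _ x' d C hx' hd).
  replace (mixl d c d) with (a d) in L by (unfold mixl; rewrite Nat.ltb_irrefl; auto).
  replace (mixu d c d) with (b d) in L by (unfold mixu; rewrite Nat.ltb_irrefl; auto).
  replace (fun t => box_int d (cell_lo a b N c) (cell_hi a b N c) g (upd x d t))
    with (fun t => box_int d (mixl d c) (mixu d c) g (upd x' d t)); auto.
  apply functional_extensionality; intro t.
  rewrite (box_int_bounds d (mixl d c) (mixu d c) (cell_lo a b N c) (cell_hi a b N c)).
  - apply box_int_high. intros i hi. unfold upd, x'. destruct (Nat.eqb_spec i d); auto.
    destruct (Nat.ltb_spec i d); auto; lia.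
  - intros i hi. unfold mixl, mixu. destruct (Nat.ltb_spec i d); try lia. auto.
Qed.

Lemma additivity : forall d, (d <= p)%nat -> forall x, B p a b x ->
  box_int d a b g x = msum d N (fun c => box_int d (cell_lo a b N c) (cell_hi a b N c) g x).
Proof.
  induction d; intros hd x hx; simpl; auto.
  assert (hdp : (d < p)%nat) by lia.
  assert (hle : a d <= b d) by (apply Rlt_le, hab; auto).
  rewrite (RInt_ext _ (fun t => msum d N (fun c => box_int d (cell_lo a b N c) (cell_hi a b N c) g (upd x d t)))); auto.
  2: { intros t ht. apply IHd; [lia|]. apply inB_upd; auto. }
  destruct (RInt_msum d N (fun c t => box_int d (cell_lo a b N c) (cell_hi a b N c) g (upd x d t)) (a d) (b d) hle) as [_ E].
  { intros c hc. constructor. apply cont1_integrable; auto. apply cell_line; auto. }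
  rewrite E. clear E.
  rewrite (msum_ext d N _ (fun c => fold_right Rplus 0 (map (fun j =>
     RInt (fun t => box_int d (cell_lo a b N c) (cell_hi a b N c) g (upd x d t))
       (a d + INR j * ((b d - a d) / INR (N d))) (a d + INR (S j) * ((b d - a d) / INR (N d)))) (seq 0 (N d))))).
  2: { intros c hc. apply RInt_split; auto. apply cell_line; auto. }
  rewrite msum_fold_exch. apply fold_plus_ext. intros j hj. apply msum_ext. intros c hc.
  replace (cell_lo a b N (fun i : nat => if i =? d then j else c i) d) with (a d + INR j * ((b d - a d) / INR (N d)))
    by (unfold cell_lo; rewrite Nat.eqb_refl; auto).
  replace (cell_hi a b N (fun i : nat => if i =? d then j else c i) d) with (a d + INR (S j) * ((b d - a d) / INR (N d)))
    by (unfold cell_hi; rewrite Nat.eqb_refl; auto).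
  f_equal. apply functional_extensionality; intro t. apply box_int_bounds.
  intros i hi. unfold cell_lo, cell_hi. destruct (Nat.eqb_spec i d); [lia|]. auto.
Qed.

Lemma global_cells : integral p a b g = msum p N (fun c => integral p (cell_lo a b N c) (cell_hi a b N c) g).
Proof.
  unfold integral. rewrite (box_int_high p a b g _ (lowpt p a)).
  2: { intros i hi. unfold lowpt. destruct (Nat.ltb_spec i p); auto; lia. }
  rewrite additivity; auto. 2: { apply lowpt_in. intros; apply Rlt_le; auto. }
  apply msum_ext. intros c hc. apply box_int_high. intros i hi. unfold lowpt. destruct (Nat.ltb_spec i p); auto; lia.
Qed.
End AddSec.

Theorem mainTheorem6 :
  forall (p k : nat) (a b : pt) (N : nat -> nat),
  (forall i, (i < p)%nat -> a i < b i) ->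
  (forall i, (i < p)%nat -> (0 < N i)%nat) ->
  forall (phi : pt -> R) (Dphi : mi -> pt -> R),
  smooth_on p (box p a b) phi Dphi ->
  (* H : the global interpolant, given cellwise by the p-n polynomials P c *)
  forall (P : mi -> pt -> R) (DP : mi -> mi -> pt -> R),
  (forall c, is_cell p N c ->
     is_pn_poly p (2 * k + 1) (P c) /\
     smooth_on p (cell_box p a b N c) (P c) (DP c) /\
     (forall al v, mi_le p k al -> is_vertex p a b N c v -> DP c al v = Dphi al v)) ->
  F_cells p k a b N DP <= F_global p k a b Dphi /\
  (forall (psi : pt -> R) (Dpsi : mi -> mi -> pt -> R),
     (forall c, is_cell p N c ->
        smooth_on p (cell_box p a b N c) psi (Dpsi c) /\
        (forall al v, mi_le p k al -> is_vertex p a b N c v -> Dpsi c al v = Dphi al v)) ->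
     F_cells p k a b N DP <= F_cells p k a b N Dpsi).
Proof.
  intros p k a b N hab hN phi Dphi hsm P DP hP.
  assert (claim2 : forall (psi : pt -> R) (Dpsi : mi -> mi -> pt -> R),
     (forall c, is_cell p N c ->
        smooth_on p (cell_box p a b N c) psi (Dpsi c) /\
        (forall al v, mi_le p k al -> is_vertex p a b N c v -> Dpsi c al v = Dphi al v)) ->
     F_cells p k a b N DP <= F_cells p k a b N Dpsi).
  { intros psi Dpsi H. unfold F_cells. apply msum_le. intros c hc.
    destruct (hP c hc) as [h1 [h2 h3]]. destruct (H c hc) as [h4 h5].
    apply (per_cell p k a b N c hab hN hc Dphi (P c) (DP c) psi (Dpsi c)); auto. }
  split; auto.
  eapply Rle_trans. apply (claim2 phi (fun _ => Dphi)).
  - intros c hc. split; auto. apply smooth_sub with (box p a b); auto.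
    intros x hx i. destruct (hx i) as [h1 h2]. split; auto. intros hi.
    destruct (cell_bounds a b N c i) as [b1 [b2 b3]]; auto. apply (proj1 (hc i)); auto.
    specialize (h1 hi). lra.
  - right. unfold F_cells, F_global. symmetry. apply global_cells; auto.
    destruct hsm as [_ [_ s3]].
    apply cw_ext with (fun y => Dphi (beta p k) y * Dphi (beta p k) y). intros; ring.
    apply cw_mult; auto.
Qed.
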